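(* Let $G$ be a finite abelian group with $|G|>1$ which is not a cyclic group of prime power order, and let $A$ be a non-empty subset of $G$. Then there exists a subgroup $H$ of $G$ of prime order such that $$|\{a+H\in G/H:\ A\cap(a+H)\neq\emptyset\}|\geq\sqrt{|A|}.$$
   Context: For a subgroup $H$ of $G$, $G/H$ is the set of cosets $a+H$; the quantity on the left is the number of cosets of $H$ that meet $A$. *)

(* Defs.v *)
From mathcomp Require Import all_boot all_fingroup all_solvable.
Set Implicit Arguments. Unset Strict Implicit. Unset Printing Implicit Defensive.
Local Open Scope group_scope.

(* Number of cosets x H (x in G) of H that meet A: the set of cosets a H, a in A. *)
Definition cosets_meeting (gT : finGroupType) (H A : {set gT}) : nat :=
  #|[set a *: H | a in A]|.

(* Main.v *)
Require Import Defs.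
From mathcomp Require Import all_boot all_fingroup all_solvable.
Local Open Scope group_scope.

Lemma count2 (gT : finGroupType) (H1 H2 : {group gT}) (A : {set gT}) :
  H1 :&: H2 = 1 -> (#|A| <= cosets_meeting H1 A * cosets_meeting H2 A)%N.
Proof.
move=> tI; rewrite /cosets_meeting -cardsX.
have inj: {in A &, injective (fun a => (a *: H1, a *: H2))}.
  move=> a b _ _ [e1 e2].
  have: b^-1 * a \in H1 :&: H2 by rewrite inE -!mem_lcoset -e1 -e2 !lcoset_refl.
  rewrite tI => /set1gP e.
  by rewrite -(mulKVg b a) e mulg1.
rewrite -(card_in_imset inj); apply: subset_leq_card.
by apply/subsetP => _ /imsetP [a aA ->]; apply/setXP; split; apply: imset_f.
Qed.

Lemma two_sub (gT : finGroupType) (G : {group gT}) :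
  abelian G -> 1 < #|G| ->
  ~ (cyclic G /\ exists p k, prime p /\ #|G| = (p ^ k)%N) ->
  exists H1 H2 : {group gT}, [/\ H1 \subset G, H2 \subset G, prime #|H1|,
     prime #|H2| & ~~ (H1 \subset H2)].
Proof.
move=> abG G1 ncyc.
case cG: (cyclic G).
- set n := #|G|.
  have pp := pdiv_prime G1; have pd := pdiv_dvd n.
  set p := pdiv n in pp pd.
  case: (pickP (fun q : 'I_n.+1 => prime q && (q %| n) && (val q != p))) => [q|none].
    case/andP => /andP [qp qd] qnp.
    have [x xG ox] := Cauchy pp pd.
    have [y yG oy] := Cauchy qp qd.
    exists <[x]>%G, <[y]>%G; rewrite /= !cycle_subG xG yG -/(order x) -/(order y) ox oy.
    split=> //; apply/negP => sub; rewrite -cycle_subG in sub; have := cardSg sub; rewrite -/(order x) -/(order y) ox oy.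
    by rewrite dvdn_prime2 // eq_sym (negbTE qnp).
  exfalso; apply: ncyc; split=> //; exists p, (logn p n); split=> //.
  have pn : p.-nat n.
    apply/pnatP; first exact: ltnW.
    move=> q qp qd; have qle : q < n.+1 by rewrite ltnS dvdn_leq // ltnW.
    have := none (Ordinal qle); rewrite /= qp qd /=.
    by move/negbFE; rewrite inE.
  by rewrite -p_part part_pnat_id.
- have r2 : 1 < 'r(G) by rewrite ltnNge -abelian_rank1_cyclic // cG.
  have [p pp rp] := rank_witness G.
  have [E] := p_rank_witness p G; rewrite -rp => /pnElemPcard [sEG abE cE].
  have E1 : E :!=: 1.
    rewrite trivg_card1 cE; apply/negP => /eqP e.
    have : (p ^ 1 < p ^ 'r(G))%N by rewrite (ltn_exp2l 1 _ (prime_gt1 pp)).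
    by rewrite e expn1 ltnNge ltnW ?prime_gt1.
  have [x xE x1] := trivgPn _ E1.
  have ox := abelem_order_p abE xE x1.
  have : ~~ (E \subset <[x]>).
    apply/negP => /subset_leq_card; rewrite -/(order x) ox cE.
    rewrite -{2}(expn1 p) leq_exp2l ?prime_gt1 //.
    by rewrite leqNgt r2.
  case/subsetPn => y yE nyx.
  have y1 : y != 1 by apply: contraNneq nyx => ->; rewrite group1.
  have oy := abelem_order_p abE yE y1.
  exists <[y]>%G, <[x]>%G; rewrite /= !cycle_subG -/(order x) -/(order y) ox oy.
  by rewrite (subsetP sEG _ xE) (subsetP sEG _ yE).
Qed.

Theorem mainTheorem7 (gT : finGroupType) (G : {group gT}) (A : {set gT}) :
  abelian G -> 1 < #|G| ->
  ~ (cyclic G /\ exists p k, prime p /\ #|G| = (p ^ k)%N) ->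
  A \subset G -> A != set0 ->
  exists H : {group gT},
    [/\ H \subset G, prime #|H| & #|A| <= (cosets_meeting H A ^ 2)%N].
Proof.
move=> abG G1 nc sAG A0.
have [H1 [H2 [s1 s2 p1 p2 n12]]] := @two_sub gT G abG G1 nc.
have := @count2 gT H1 H2 A (prime_TIg p1 n12).
case: (leqP (cosets_meeting H2 A) (cosets_meeting H1 A)) => le.
  move=> h; exists H1; split=> //; apply: leq_trans h _.
  by rewrite expnS expn1 leq_mul2l le orbT.
move=> h; exists H2; split=> //; apply: leq_trans h _.
by rewrite expnS expn1 leq_mul2r ltnW ?orbT.
Qed.
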